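(* Let $P$ be a finite graded poset with $\hat0$ and let $\lambda$ be an ER-labeling of $P$ satisfying the rank two switching property and the braid relation. Then for every interval $[x,y]$ of $P$, each connected component of the graph $G_{[x,y]}$ contains a unique sink, i.e., a unique ascent-free maximal chain of $[x,y]$.
   Context: An E-labeling of $P$ is a map $\lambda$ from the set of cover relations $x\lessdot y$ of $P$ to a poset $\Lambda$. The word of labels of a saturated chain $x_0\lessdot x_1\lessdot\cdots\lessdot x_\ell$ is $\lambda(x_0\lessdot x_1)\cdots\lambda(x_{\ell-1}\lessdot x_\ell)$; the chain is increasing if this word is strictly increasing in $\Lambda$, and ascent-free if there is no $i$ with $\lambda(x_{i-1}\lessdot x_i)<\lambda(x_i\lessdot x_{i+1})$. $\lambda$ is an ER-labeling if every closed interval has exactly one increasing maximal chain. $\lambda$ has the rank two switching property if for every saturated chain $\hat0=x_0\lessdot\cdots\lessdot x_k$ and every $i$ with $\lambda(x_{i-1}\lessdot x_i)<\lambda(x_i\lessdot x_{i+1})$ there is a unique element $x_i'$ with $x_{i-1}\lessdot x_i'\lessdot x_{i+1}$, $\lambda(x_{i-1}\lessdot x_i')=\lambda(x_i\lessdot x_{i+1})$ and $\lambda(x_i'\lessdot x_{i+1})=\lambda(x_{i-1}\lessdot x_i)$. For a maximal chain $\mathbf c$ of an interval $[x,y]$ with an ascent at rank position $i$, the quadratic exchange $U_i(\mathbf c)$ replaces $x_i$ by this $x_i'$; if there is no ascent at position $i$, $U_i(\mathbf c)=\mathbf c$. $G_{[x,y]}$ is the directed graph on the maximal chains of $[x,y]$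 with an edge $\mathbf c\to U_i(\mathbf c)$ whenever $U_i(\mathbf c)\neq\mathbf c$; a sink is a vertex of outdegree $0$. The braid relation holds if for every maximal chain $\mathbf c$ of any interval with $\lambda(x_{i-1}\lessdot x_i)<\lambda(x_i\lessdot x_{i+1})<\lambda(x_{i+1}\lessdot x_{i+2})$ we have $U_iU_{i+1}U_i(\mathbf c)=U_{i+1}U_iU_{i+1}(\mathbf c)$. *)

(* Defs.v *)
From mathcomp Require Import all_boot all_order.
From Stdlib Require Import Relations.
Set Implicit Arguments. Unset Strict Implicit. Unset Printing Implicit Defensive.
Import Order.TTheory.
Local Open Scope order_scope.

Section Labelings.
Context {d : Order.disp_t} {P : finBPOrderType d}.
Context {dL : Order.disp_t} {L : porderType dL}.

Definition cover (x y : P) : bool :=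
  (x < y) && [forall z : P, ~~ ((x < z) && (z < y))].

(* A (saturated) chain is represented by the full list of its elements
   x_0 :: x_1 :: ... :: x_l.  Maximal chains of [x,y]: *)
Definition mchain (x y : P) (c : seq P) : bool :=
  match c with
  | [::] => false
  | x' :: s => [&& x' == x, path cover x' s & last x' s == y]
  end.

Definition pmaxchain (c : seq P) : bool :=
  match c with
  | [::] => false
  | x' :: s => [&& x' == \bot, path cover x' s &
                   [forall z : P, ~~ (last x' s < z)]]
  end.

Definition graded : Prop :=
  forall c1 c2, pmaxchain c1 -> pmaxchain c2 -> size c1 = size c2.

Variable lam : P -> P -> L.

Definition labels (c : seq P) : seq L :=
  match c with [::] => [::] | x :: s => pairmap lam x s end.

Definition increasing (c : seq P) : bool := sorted (fun a b => a < b) (labels c).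

Definition elt (c : seq P) (i : nat) : P := nth \bot c i.

(* ascent at rank position i (1 <= i <= l-1) *)
Definition ascent (c : seq P) (i : nat) : bool :=
  [&& 0 < i, i.+1 < size c &
      lam (elt c i.-1) (elt c i) < lam (elt c i) (elt c i.+1)].

Definition ascent_free (c : seq P) : Prop := forall i, ~~ ascent c i.

Definition ER_labeling : Prop :=
  forall x y : P, x <= y -> exists! c, mchain x y c /\ increasing c.

Definition rank_two_switching : Prop :=
  forall s : seq P, path cover \bot s ->
  forall i, ascent (\bot :: s) i ->
  let c := \bot :: s in
  exists! z : P, cover (elt c i.-1) z /\ cover z (elt c i.+1) /\
    lam (elt c i.-1) z = lam (elt c i) (elt c i.+1) /\
    lam z (elt c i.+1) = lam (elt c i.-1) (elt c i).

Definition U (c : seq P) (i : nat) : seq P :=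
  if ascent c i then
    match [pick z | [&& cover (elt c i.-1) z, cover z (elt c i.+1),
                        lam (elt c i.-1) z == lam (elt c i) (elt c i.+1) &
                        lam z (elt c i.+1) == lam (elt c i.-1) (elt c i)]] with
    | Some z => set_nth \bot c i z
    | None => c
    end
  else c.

Definition braid_relation : Prop :=
  forall (x y : P) (c : seq P) (i : nat), mchain x y c ->
    ascent c i -> ascent c i.+1 ->
    U (U (U c i) i.+1) i = U (U (U c i.+1) i) i.+1.

Definition Gedge (x y : P) (c c' : seq P) : Prop :=
  mchain x y c /\ mchain x y c' /\ exists i, c' = U c i /\ c' <> c.

Definition Gconn (x y : P) : relation (seq P) := clos_refl_sym_trans _ (Gedge x y).

Definition Gsink (x y : P) (c : seq P) : Prop :=
  mchain x y c /\ forall c', ~ Gedge x y c c'.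

End Labelings.

(* Main.v *)
Require Import Defs.
From mathcomp Require Import all_boot all_order.
From mathcomp Require Import zify.
From Stdlib Require Import Relations Classical.
Set Implicit Arguments. Unset Strict Implicit. Unset Printing Implicit Defensive.
Import Order.TTheory.
Local Open Scope order_scope.

Section Inv.
Context {dL : Order.disp_t} {L : porderType dL}.

Fixpoint inv (w : seq L) : nat :=
  if w is a :: w' then (count (fun b : L => (b < a)%O) w' + inv w')%N else 0%N.

Lemma inv_swap (u : seq L) (a b : L) (v : seq L) : a < b ->
  inv (u ++ [:: b, a & v]) = (inv (u ++ [:: a, b & v])).+1.
Proof.
move=> ab; elim: u => [|x u IH] /=.
  rewrite ab (lt_gtF ab) /=; lia.
rewrite IH !count_cat /=; lia.
Qed.

Lemma inv_le (w : seq L) : (inv w <= size w * size w)%N.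
Proof.
elim: w => [|a w IH] //=; have := count_size (fun b : L => (b < a)%O) w; nia.
Qed.
End Inv.
Section Chains.
Context {d : Order.disp_t} {P : finBPOrderType d}.

Lemma cover_below (a b : P) : a < b -> exists z, a <= z /\ Defs.cover z b.
Proof.
move: {2}#|[pred w : P | (a < w) && (w < b)]| (leqnn #|[pred w : P | (a < w) && (w < b)]|) => n.
elim: n a => [|n IH] a.
  rewrite leqn0 => /eqP /card0_eq H ab; exists a; split => //.
  rewrite /Defs.cover ab /=; apply/forallP => z; have := H z; rewrite !inE => -> //.
move=> Hn ab.
case: (boolP [forall z : P, ~~ ((a < z) && (z < b))]) => Hf.
  by exists a; rewrite /Defs.cover ab Hf.
move: Hf; rewrite negb_forall => /existsP [w]; rewrite negbK => /andP [aw wb].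
have : (#|[pred t : P | ((w < t) && (t < b))%O]| <= n)%N.
  rewrite -ltnS; apply: leq_trans Hn; apply: proper_card; apply/properP; split.
    apply/subsetP => t; rewrite !inE => /andP [wt ->]; rewrite (lt_trans aw wt) //.
  by exists w; rewrite !inE ?aw ?wb // ltxx.
move=> /IH /(_ wb) [z [wz czb]]; exists z; split => //.
exact: le_trans (ltW aw) wz.
Qed.

Lemma chain_from_bot (x : P) : exists s, path Defs.cover \bot s /\ last \bot s = x.
Proof.
move: {2}#|[pred t : P | t < x]| (leqnn #|[pred t : P | t < x]|) => n.
elim: n x => [|n IH] x Hn.
  case: (eqVneq x \bot) => [-> | nx]; first by exists [::].
  have bx : \bot < x by rewrite lt_neqAle eq_sym nx le0x.
  move: Hn; rewrite leqn0 => /eqP /card0_eq /(_ \bot); rewrite !inE bx //.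
case: (eqVneq x \bot) => [-> | nx]; first by exists [::].
have bx : \bot < x by rewrite lt_neqAle eq_sym nx le0x.
have [z [_ czx]] := cover_below bx.
have zx : z < x by move: czx => /andP [].
have : (#|[pred t : P | (t < z)%O]| <= n)%N.
  rewrite -ltnS; apply: leq_trans Hn; apply: proper_card; apply/properP; split.
    apply/subsetP => t; rewrite !inE => tz; exact: lt_trans tz zx.
  by exists z; rewrite !inE ?zx // ltxx.
move=> /IH [s [ps ls]]; exists (rcons s x); rewrite rcons_path last_rcons ps ls czx //.
Qed.
End Chains.

Section Main.
Context {d : Order.disp_t} {P : finBPOrderType d}.
Context {dL : Order.disp_t} {L : porderType dL}.
Context (lam : P -> P -> L).

Fixpoint lab (c : seq P) : seq L :=
  match c with
  | [::] => [::]
  | a :: t => match t with [::] => [::] | b :: _ => lam a b :: lab t end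
  end.

Lemma lab_cat p u r : lab (p ++ u :: r) = lab (rcons p u) ++ lab (u :: r).
Proof.
elim: p => [|a p IH] //=.
case: p IH => [|b p] IH //=; move: IH => /= IH; rewrite IH; done.
Qed.

Lemma size_lab c : size (lab c) = (size c).-1.
Proof. by elim: c => [|a [|b t] IH] //=; rewrite IH. Qed.

Definition W (c : seq P) (i : nat) : option P :=
  if ascent lam c i then
    [pick z | [&& Defs.cover (elt c i.-1) z, Defs.cover z (elt c i.+1),
                  lam (elt c i.-1) z == lam (elt c i) (elt c i.+1) &
                  lam z (elt c i.+1) == lam (elt c i.-1) (elt c i)]]
  else None.

Lemma U_W (c : seq P) i : U lam c i = if W c i is Some z then set_nth \bot c i z else c.
Proof. by rewrite /U /W; case: (ascent lam c i). Qed.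

Lemma ascentE (c : seq P) i : ascent lam c i =
  [&& (0 < i)%N, (i.+1 < size c)%N & lam (elt c i.-1) (elt c i) < lam (elt c i) (elt c i.+1)].
Proof. by rewrite /ascent !ltEnat. Qed.

Lemma W_spec (c : seq P) i z : W c i = Some z ->
  [/\ [&& (0 < i)%N, (i.+1 < size c)%N & lam (elt c i.-1) (elt c i) < lam (elt c i) (elt c i.+1)], Defs.cover (elt c i.-1) z, Defs.cover z (elt c i.+1),
      lam (elt c i.-1) z = lam (elt c i) (elt c i.+1) &
      lam z (elt c i.+1) = lam (elt c i.-1) (elt c i)].
Proof.
rewrite /W -ascentE; case: ifP => // asc; case: pickP => // z' /and4P [h1 h2 /eqP h3 /eqP h4] [<-].
by split.
Qed.

Lemma W_neq (c : seq P) i z : W c i = Some z -> z != elt c i.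
Proof.
move/W_spec => [/and3P [_ _ lt] _ _ e3 _]; apply/eqP => ez.
by move: lt; rewrite -e3 ez ltxx.
Qed.

Lemma W_ext (c c' : seq P) i : size c' = size c -> elt c' i.-1 = elt c i.-1 ->
  elt c' i = elt c i -> elt c' i.+1 = elt c i.+1 -> W c' i = W c i.
Proof. by move=> Hs E1 E2 E3; rewrite /W /ascent Hs E1 E2 E3. Qed.

Lemma elt_set (c : seq P) i (z : P) k : elt (set_nth \bot c i z) k = if k == i then z else elt c k.
Proof. by rewrite /elt nth_set_nth. Qed.

Lemma mchainE (x y : P) (c : seq P) : mchain x y c <->
  [/\ (0 < size c)%N, elt c 0 = x, elt c (size c).-1 = y &
      forall k, (k.+1 < size c)%N -> Defs.cover (elt c k) (elt c k.+1)].
Proof.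
case: c => [|a s] /=; first by split => // [[]].
have El : elt (a :: s) (size s) = last a s.
  by rewrite /elt -[size s]/((size (a :: s)).-1) nth_last.
rewrite El; split.
  move/and3P => [/eqP -> ps /eqP ls]; split => // k hk.
  by move/(pathP \bot): ps => /(_ k hk).
move=> [_ e0 el hp]; apply/and3P; split.
- by apply/eqP.
- by apply/(pathP \bot) => k hk; apply: (hp k).
- by apply/eqP.
Qed.

Lemma mchain_set (x y : P) (c : seq P) i (z : P) : mchain x y c -> (0 < i)%N -> (i.+1 < size c)%N ->
  Defs.cover (elt c i.-1) z -> Defs.cover z (elt c i.+1) ->
  mchain x y (set_nth \bot c i z).
Proof.
move=> /mchainE [s0 e0 el hp] i0 isz c1 c2; apply/mchainE.
have -> : size (set_nth \bot c i z) = size c.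
  by rewrite size_set_nth; apply/maxn_idPr; apply: ltnW.
split => //.
- by rewrite elt_set; case: eqP => // ei; rewrite -ei in i0.
- rewrite elt_set; case: eqP => // ei; lia.
- move=> k hk; rewrite !elt_set.
  have [ki|ki] := eqVneq k i.
    rewrite ki (_ : (i.+1 == i) = false) ?eqxx //; last by lia.
  case: eqP => [e|_]; last exact: hp.
  idtac.
  by rewrite (_ : k = i.-1) //; lia.
Qed.

Lemma mchain_U (x y : P) (c : seq P) i : mchain x y c -> mchain x y (U lam c i).
Proof.
move=> mc; rewrite U_W; case Wc: (W c i) => [z|] //.
have [/and3P [i0 isz _] c1 c2 _ _] := W_spec Wc.
exact: mchain_set.
Qed.

Section Fix.
Context (x y : P).
Notation R := (Gedge lam x y).
Notation Rs := (clos_refl_trans _ R).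

Lemma edge_inv c c' : R c c' -> size c' = size c /\ inv (lab c') = (inv (lab c)).+1.
Proof.
move=> [mc [mc' [i [E ne]]]]; move: E ne; rewrite U_W.
case Wc: (W c i) => [z|]; last by move=> ->.
move=> -> _; have [/and3P [i0 isz lt] c1 c2 e3 e4] := W_spec Wc.
split; first by rewrite size_set_nth; apply/maxn_idPr; apply: ltnW.
have D : c = take i.-1 c ++ [:: elt c i.-1, elt c i, elt c i.+1 & drop i.+2 c].
  rewrite -{1}(cat_take_drop i.-1 c); congr (_ ++ _).
  rewrite /elt (drop_nth \bot); last exact: leq_ltn_trans (leq_pred i) (ltn_trans (ltnSn i) isz).
  rewrite prednK // (drop_nth \bot); last exact: ltn_trans (ltnSn i) isz.
  by rewrite (drop_nth \bot).
have D' : set_nth \bot c i z = take i.-1 c ++ [:: elt c i.-1, z, elt c i.+1 & drop i.+2 c].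
  rewrite set_nthE (_ : (i < size c)%N) ?(ltnW isz) //.
  rewrite -{1}(prednK i0) (take_nth \bot); last exact: leq_ltn_trans (leq_pred i) (ltn_trans (ltnSn i) isz).
  by rewrite (drop_nth \bot) // cat_rcons.
rewrite D'; move: lt e3 e4 D; move: (take i.-1 c) (drop i.+2 c) (elt c i.-1) (elt c i) (elt c i.+1).
move=> p q u v w lt e3 e4 ->.
rewrite !lab_cat /= e3 e4 inv_swap //.
Qed.

Definition m (c : seq P) := (size c * size c - inv (lab c))%N.

Lemma edge_m c c' : R c c' -> (m c' < m c)%N.
Proof.
move=> /edge_inv [Hs Hi]; rewrite /m.
have := inv_le (lab c'); rewrite size_lab Hs Hi.
move: (inv (lab c)) (size c) => a b; nia.
Qed.

Lemma Ustep c k : mchain x y c -> Rs c (U lam c k).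
Proof.
move=> mc; have mu := mchain_U k mc; move: mu; rewrite U_W.
case Wc: (W c k) => [z|] mu; last exact: rt_refl.
apply: rt_step; split => //; split => //; exists k; rewrite U_W Wc; split => //.
move=> E; have := W_neq Wc; have := congr1 (fun s => elt s k) E.
by rewrite /= elt_set eqxx => ->; rewrite eqxx.
Qed.

Lemma rt_mchain a b : Rs a b -> mchain x y a -> mchain x y b.
Proof. by elim => // [a' b' [_ [? _]]|a' b' c' _ IH1 _ IH2] // /IH1 /IH2. Qed.

Lemma rt_conn a b : Rs a b -> Gconn lam x y a b.
Proof.
elim => [a' b' H|a'|a' b' c' _ IH1 _ IH2].
- exact: rst_step.
- exact: rst_refl.
- exact: rst_trans IH1 IH2.
Qed.

Context (Hbr : braid_relation lam).

Lemma LC_lt c i j z1 z2 : mchain x y c -> W c i = Some z1 -> W c j = Some z2 ->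
  (i < j)%N -> exists e, Rs (U lam c i) e /\ Rs (U lam c j) e.
Proof.
move=> mc W1 W2 ij.
have [a1 _ _ _ _] := W_spec W1; have [a2 _ _ _ _] := W_spec W2.
have [ej|jne] := eqVneq j i.+1.
  rewrite ej in a2 *; exists (U lam (U lam (U lam c i) i.+1) i); split.
    apply: rt_trans (Ustep _ (mchain_U _ (mchain_U _ mc))).
    exact: Ustep (mchain_U _ mc).
  rewrite (Hbr mc); first apply: rt_trans (Ustep _ (mchain_U _ (mchain_U _ mc))).
  - exact: Ustep (mchain_U _ mc).
  - by rewrite ascentE.
  - by rewrite ascentE.
have ij2 : (i.+2 <= j)%N by lia.
exists (U lam (U lam c i) j); split; first exact: Ustep (mchain_U _ mc).
have -> : U lam (U lam c i) j = U lam (U lam c j) i.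
  have [/and3P [i0 isz _] _ _ _ _] := W_spec W1.
  have [/and3P [j0 jsz _] _ _ _ _] := W_spec W2.
  rewrite !(U_W c) W1 W2 !U_W.
  rewrite (@W_ext c _ j); first rewrite (@W_ext c _ i).
  - rewrite W1 W2 set_set_nth (_ : (i == j) = false) //; lia.
  all: rewrite ?size_set_nth ?elt_set; try by apply/maxn_idPr; lia.
  1-6: by case: eqP => // e; exfalso; lia.
exact: Ustep (mchain_U _ mc).
Qed.

Lemma LC c c1 c2 : R c c1 -> R c c2 -> exists e, Rs c1 e /\ Rs c2 e.
Proof.
move=> [mc [_ [i [E1 ne1]]]] [_ [_ [j [E2 ne2]]]].
move: E1 ne1; rewrite U_W; case W1: (W c i) => [z1|]; last by move=> ->.
move: E2 ne2; rewrite U_W; case W2: (W c j) => [z2|]; last by move=> ->.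
move=> E2 _ E1 _.
have E1' : c1 = U lam c i by rewrite U_W W1.
have E2' : c2 = U lam c j by rewrite U_W W2.
rewrite E1' E2'.
case: (ltngtP i j) => [ij|ji|<-].
- exact: LC_lt W1 W2 ij.
- have [e [h1 h2]] := LC_lt mc W2 W1 ji; by exists e.
- by exists (U lam c i); split; apply: rt_refl.
Qed.

Definition nf c := forall c', ~ R c c'.

Lemma NF_exists c : exists n, Rs c n /\ nf n.
Proof.
move: (leqnn (m c)); move: {2}(m c) => k; elim: k c => [|k IH] c hk.
  exists c; split; first exact: rt_refl.
  by move=> c' /edge_m; lia.
case: (classic (exists c', R c c')) => [[c' Hc']|H].
  have /IH [n [h1 h2]] : (m c' <= k)%N by have := edge_m Hc'; lia.
  by exists n; split => //; apply: rt_trans h1; apply: rt_step.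
exists c; split; first exact: rt_refl.
by move=> c' Hc'; apply: H; exists c'.
Qed.

Lemma NF_unique c n1 n2 : Rs c n1 -> nf n1 -> Rs c n2 -> nf n2 -> n1 = n2.
Proof.
move: (leqnn (m c)); move: {2}(m c) => k; elim: k c n1 n2 => [|k IH] c n1 n2 hk
  /clos_rt_rt1n_iff H1 nf1 /clos_rt_rt1n_iff H2 nf2.
  case: H1 nf1 => [|c1 n1' Hc1 _] nf1; last by have := edge_m Hc1; lia.
  case: H2 nf2 => [|c2 n2' Hc2 _] nf2 //; last by have := edge_m Hc2; lia.
case: H1 nf1 => [|c1 n1' Hc1 H1] nf1.
  by case: H2 nf2 => [|c2 n2' Hc2 _] nf2 //; case: (nf1 _ Hc2).
case: H2 nf2 => [|c2 n2' Hc2 H2] nf2; first by case: (nf2 _ Hc1).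
have [e [e1 e2]] := LC Hc1 Hc2.
have [ne [hne nfe]] := NF_exists e.
have m1 : (m c1 <= k)%N by rewrite -ltnS; apply: leq_trans (edge_m Hc1) hk.
have m2 : (m c2 <= k)%N by rewrite -ltnS; apply: leq_trans (edge_m Hc2) hk.
have E1 := IH c1 n1' ne m1 (proj2 (clos_rt_rt1n_iff _ _ _ _) H1) nf1 (@rt_trans _ _ _ _ _ e1 hne) nfe.
have E2 := IH c2 n2' ne m2 (proj2 (clos_rt_rt1n_iff _ _ _ _) H2) nf2 (@rt_trans _ _ _ _ _ e2 hne) nfe.
by rewrite E1 E2.
Qed.

Lemma Conn a b : Gconn lam x y a b ->
  forall n1 n2, Rs a n1 -> nf n1 -> Rs b n2 -> nf n2 -> n1 = n2.
Proof.
elim => [a' b' H|a'|a' b' _ IH|a' b' c' _ IH1 _ IH2] n1 n2 h1 f1 h2 f2.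
- apply: (NF_unique h1 f1 _ f2); apply: rt_trans h2; exact: rt_step.
- exact: NF_unique h1 f1 h2 f2.
- by symmetry; apply: IH h2 f2 h1 f1.
- have [nb [hb fb]] := NF_exists b'.
  have E1 := IH1 n1 nb h1 f1 hb fb.
  have E2 := IH2 nb n2 hb fb h2 f2.
  by rewrite E1 E2.
Qed.

Lemma af_nf c : ascent_free lam c -> nf c.
Proof. by move=> af c' [_ [_ [i [E ne]]]]; rewrite /U (negbTE (af i)) in E. Qed.

Lemma nf_af c : rank_two_switching lam -> mchain x y c -> nf c -> ascent_free lam c.
Proof.
move=> Hsw mc nfc i; apply/negP => asc.
suff [z Wz] : exists z, W c i = Some z.
  apply: (nfc (U lam c i)); split => //; split; first exact: mchain_U.
  exists i; split => //; rewrite U_W Wz => E.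
  have := W_neq Wz; have := congr1 (fun s => elt s i) E.
  by rewrite /= elt_set eqxx => ->; rewrite eqxx.
rewrite /W asc; case: pickP => [z _|H]; first by exists z.
exfalso.
have [s0 [ps0 ls0]] := chain_from_bot x.
case: c mc nfc asc H => [//|a s] /and3P [/eqP ea ps _] nfc asc H.
rewrite ea in ps asc H.
have pf : path Defs.cover \bot (s0 ++ s) by rewrite cat_path ps0 ls0 ps.
have Hfull : \bot :: (s0 ++ s) = belast \bot s0 ++ x :: s.
  by rewrite -cat_cons lastI ls0 cat_rcons.
have Ee : forall k, elt (\bot :: (s0 ++ s)) (k + size s0) = elt (x :: s) k.
  move=> k; rewrite Hfull /elt nth_cat size_belast.
  by rewrite ltnNge leq_addl /= addnK.
move: asc => /and3P [i0 isz lt].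
have asc' : ascent lam (\bot :: (s0 ++ s)) (i + size s0).
  apply/and3P; split; first by lia.
    by rewrite /= size_cat; move: isz => /=; lia.
  rewrite (_ : (i + size s0).-1 = i.-1 + size s0); last by lia.
  by rewrite -addSn !Ee.
have := Hsw _ pf _ asc' => /= [[z [[h1 [h2 [h3 h4]]] _]]].
move: h1 h2 h3 h4.
rewrite (_ : (i + size s0).-1 = i.-1 + size s0); last by lia.
have Ee' : forall k, elt (s0 ++ s) (k + size s0) = elt (x :: s) k.+1.
  by move=> k; rewrite -Ee addSn.
rewrite !Ee' !Ee => h1 h2 h3 h4.
by have := H z; rewrite h1 h2 h3 h4 !eqxx.
Qed.

End Fix.
End Main.

Theorem corollary3p13 (d : Order.disp_t) (P : finBPOrderType d)
  (dL : Order.disp_t) (L : porderType dL) (lam : P -> P -> L) :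
  @graded d P ->
  ER_labeling lam -> rank_two_switching lam -> braid_relation lam ->
  forall (x y : P) (c : seq P), mchain x y c ->
    (exists! s, mchain x y s /\ Gconn lam x y c s /\ Gsink lam x y s) /\
    (exists! s, mchain x y s /\ Gconn lam x y c s /\ ascent_free lam s).
Proof.
move=> _ _ Hsw Hbr x y c mc.
have [n [cn nfn]] := NF_exists lam x y c.
have mn := rt_mchain cn mc.
split; exists n; split.
- by split => //; split; [exact: rt_conn | split].
- move=> s [ms [cs [_ nfs]]].
  exact: (Conn Hbr cs cn nfn (rt_refl _ _ s) nfs).
- by split => //; split; [exact: rt_conn | exact: (nf_af Hsw mn nfn)].
- move=> s [ms [cs afs]].
  exact: (Conn Hbr cs cn nfn (rt_refl _ _ s) (af_nf afs)).
Qed.
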